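(* Let $\Theta=(\theta_1,\theta_2,\theta_3)\in\mathbb{R}^3$ with $1,\theta_1,\theta_2,\theta_3$ linearly independent over $\mathbb{Z}$, and let $(x_l)$, $(\zeta_l)$, $(\mathbf{z}_l)$ be the associated best approximations, their errors and best approximation vectors. Let $\nu<k$ be indices and suppose that all vectors $\mathbf{z}_l$, $\nu\leqslant l\leqslant k$, lie in a certain two-dimensional linear subspace $\pi\subset\mathbb{R}^4$. Let $\Lambda=\pi\cap\mathbb{Z}^4$ be the corresponding two-dimensional lattice with two-dimensional fundamental volume $\det\Lambda$. Then for all $l$ with $\nu\leqslant l\leqslant k-1$, $$ C_1\det\Lambda\leqslant \zeta_l x_{l+1}\leqslant 2\det\Lambda, $$ where $$C_1=\left(2\sqrt{3\left(1+\left(|\theta_1|+\tfrac12\right)^2+\left(|\theta_2|+\tfrac12\right)^2+\left(|\theta_3|+\tfrac12\right)^2\right)}\right)^{-1}.$$ In particular, $\det\Lambda\geqslant \frac12\min(\zeta_\nu x_{\nu+1},\ \zeta_{k-1}x_k)$.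
   Context: For a real number $u$, $\|u\|$ is the distance from $u$ to the nearest integer. For an integer $x$ put $\zeta(x)=\max_{1\leqslant j\leqslant 3}\|\theta_j x\|$. A positive integer $x$ is a best approximation if $\zeta(x)=\min\{\zeta(x'): x'\in\mathbb{Z},\ 0<x'\leqslant x\}$. When $1,\theta_1,\theta_2,\theta_3$ are linearly independent over $\mathbb{Z}$, the best approximations form a sequence $x_1<x_2<\dots$ with $\zeta_1>\zeta_2>\dots$, where $\zeta_\nu=\zeta(x_\nu)$. Choose integers $y_{j,\nu}$ with $\|\theta_j x_\nu\|=|\theta_j x_\nu-y_{j,\nu}|$, and put $\mathbf{z}_\nu=(x_\nu,y_{1,\nu},y_{2,\nu},y_{3,\nu})\in\mathbb{Z}^4$ (the best approximation vectors). *)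

(* Defs.v *)
From Stdlib Require Export Reals ZArith.
Open Scope R_scope.

Definition dnint (u : R) : R := Rmin (frac_part u) (1 - frac_part u).

Definition zeta (th1 th2 th3 : R) (x : Z) : R :=
  Rmax (Rmax (dnint (th1 * IZR x)) (dnint (th2 * IZR x))) (dnint (th3 * IZR x)).

Definition is_best (th1 th2 th3 : R) (x : Z) : Prop :=
  (0 < x)%Z /\ forall x' : Z, (0 < x' <= x)%Z -> zeta th1 th2 th3 x <= zeta th1 th2 th3 x'.

(* vectors of R^4 / Z^4 are represented by functions on the indices 0,1,2,3 *)
Definition dot4 (u v : nat -> R) : R := u 0%nat * v 0%nat + u 1%nat * v 1%nat + u 2%nat * v 2%nat + u 3%nat * v 3%nat.

Definition zvec (z : nat -> Z) : nat -> R := fun i => IZR (z i).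

Definition in_span (p1 p2 v : nat -> R) : Prop :=
  exists c d : R, forall i, (i < 4)%nat -> v i = c * p1 i + d * p2 i.

Definition lin_indep2 (p1 p2 : nat -> R) : Prop :=
  forall c d : R, (forall i, (i < 4)%nat -> c * p1 i + d * p2 i = 0) -> c = 0 /\ d = 0.

(* two-dimensional covolume of the lattice with basis a, b (sqrt of Gram determinant) *)
Definition detL (a b : nat -> Z) : R :=
  sqrt (dot4 (zvec a) (zvec a) * dot4 (zvec b) (zvec b) - (dot4 (zvec a) (zvec b))^2).

Definition C1_const (th1 th2 th3 : R) : R :=
  / (2 * sqrt (3 * (1 + (Rabs th1 + /2)^2 + (Rabs th2 + /2)^2 + (Rabs th3 + /2)^2))).

(* Main.v *)
Require Import Defs.
From Stdlib Require Import Reals ZArith Lra Lia Psatz Znumtheory.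
Open Scope R_scope.

Definition M3 (a b c : R) := Rmax (Rmax a b) c.

Lemma M3_attain a b c : M3 a b c = a \/ M3 a b c = b \/ M3 a b c = c.
Proof. unfold M3, Rmax; repeat destruct Rle_dec; auto. Qed.

Lemma M3_ge a b c : a <= M3 a b c /\ b <= M3 a b c /\ c <= M3 a b c.
Proof. unfold M3, Rmax; repeat destruct Rle_dec; lra. Qed.

Lemma M3_lub a b c z : a <= z -> b <= z -> c <= z -> M3 a b c <= z.
Proof. unfold M3; intros; repeat apply Rmax_lub; auto. Qed.

Lemma M3_lub_lt a b c z : a < z -> b < z -> c < z -> M3 a b c < z.
Proof. unfold M3; intros; repeat apply Rmax_lub_lt; auto. Qed.

Lemma M3_mono a b c a' b' c' : a <= a' -> b <= b' -> c <= c' -> M3 a b c <= M3 a' b' c'.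
Proof. intros; destruct (M3_ge a' b' c') as [? []]; apply M3_lub; lra. Qed.

Lemma Rabs_eq_cases x y : Rabs x = Rabs y -> x = y \/ x = - y.
Proof. unfold Rabs; repeat destruct Rcase_abs; intros; lra. Qed.

Lemma dnint_le r n : dnint r <= Rabs (r - IZR n).
Proof.
  unfold dnint, frac_part. destruct (base_Int_part r) as [H1 H2].
  destruct (Z_le_gt_dec n (Int_part r)) as [Hn|Hn].
  - apply IZR_le in Hn. eapply Rle_trans; [apply Rmin_l|].
    rewrite Rabs_pos_eq; lra.
  - assert (Hn' : (Int_part r + 1 <= n)%Z) by lia. apply IZR_le in Hn'.
    rewrite plus_IZR in Hn'.
    eapply Rle_trans; [apply Rmin_r|].
    rewrite Rabs_left1; lra.
Qed.

Lemma dnint_half r : 0 <= dnint r <= /2.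
Proof.
  unfold dnint. destruct (base_fp r). unfold Rmin; destruct Rle_dec; lra.
Qed.

Lemma IZR_small n : Rabs (IZR n) < 1 -> n = 0%Z.
Proof.
  intro H. apply Rabs_def2 in H. destruct H.
  assert (-1 < n)%Z by (apply lt_IZR; lra).
  assert (n < 1)%Z by (apply lt_IZR; lra). lia.
Qed.

Lemma centered P0 D : D <> 0%Z -> exists k P, P0 = (k*D + P)%Z /\ (2 * Z.abs P <= Z.abs D)%Z.
Proof.
  intro HD. pose proof (Z.div_mod P0 D HD) as E.
  destruct (Z_lt_le_dec 0 D).
  - pose proof (Z.mod_pos_bound P0 D l).
    destruct (Z_le_gt_dec (2 * (P0 mod D)) D).
    + exists (P0 / D)%Z, (P0 mod D). split; lia.
    + exists (P0 / D + 1)%Z, (P0 mod D - D)%Z. split; lia.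
  - assert (D < 0)%Z by lia. pose proof (Z.mod_neg_bound P0 D H).
    destruct (Z_le_gt_dec (-2 * (P0 mod D)) (-D)).
    + exists (P0 / D)%Z, (P0 mod D). split; lia.
    + exists (P0 / D + 1)%Z, (P0 mod D - D)%Z. split; lia.
Qed.

Lemma notdiv m1 n1 m2 n2 D : D = (m1*n2 - m2*n1)%Z -> (2 <= Z.abs D)%Z ->
  ~ ((D | n2) /\ (D | (- n1))) \/ ~ ((D | (- m2)) /\ (D | m1)).
Proof.
  intros HD H2.
  destruct (Zdivide_dec D n2) as [[k1 E1]|]; [|left; tauto].
  destruct (Zdivide_dec D (-n1)) as [[k2 E2]|]; [|left; tauto].
  destruct (Zdivide_dec D (-m2)) as [[k3 E3]|]; [|right; tauto].
  destruct (Zdivide_dec D m1) as [[k4 E4]|]; [|right; tauto].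
  exfalso.
  assert (E : (D * (1 - D * (k4*k1 - k3*k2)) = 0)%Z).
  { assert (n1 = - (k2 * D))%Z by lia. assert (m2 = - (k3*D))%Z by lia.
    rewrite H, H0, E1, E4 in HD. nia. }
  apply Z.mul_eq_0 in E. destruct E as [E|E]; [lia|].
  assert (D * (k4*k1 - k3*k2) = 1)%Z by lia.
  apply Z.eq_mul_1 in H. lia.
Qed.

Lemma key_ub X0 X1 z0 z1 d :
  0 < X0 < X1 -> 0 <= z1 <= z0 ->
  (exists e0 e1, z0 <= Rabs e0 /\ Rabs e1 <= z1 /\ Rabs (X1*e0 - X0*e1) <= d) ->
  (exists f0 f1, Rabs f1 <= z1 /\ z0 <= Rabs (f1 - f0) /\ Rabs (X1*f0 - X0*f1) <= d) ->
  X1 * z0 <= 2 * d.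
Proof.
  intros HX Hz [e0 [e1 [A1 [A2 A3]]]] [f0 [f1 [B1 [B2 B3]]]].
  assert (h1 : X1 * Rabs e0 <= Rabs (X1*e0 - X0*e1) + X0 * Rabs e1).
  { replace (X1 * Rabs e0) with (Rabs (X1*e0)) by (rewrite Rabs_mult, Rabs_pos_eq; lra).
    replace (X0 * Rabs e1) with (Rabs (X0*e1)) by (rewrite Rabs_mult, Rabs_pos_eq; lra).
    replace (X1*e0) with ((X1*e0 - X0*e1) + X0*e1) at 1 by ring. apply Rabs_triang. }
  assert (h2 : X1 * Rabs (f1 - f0) <= Rabs (X1*f0 - X0*f1) + (X1 - X0) * Rabs f1).
  { replace (X1 * Rabs (f1 - f0)) with (Rabs (X1*(f1 - f0))) by (rewrite Rabs_mult, Rabs_pos_eq; lra).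
    replace ((X1 - X0) * Rabs f1) with (Rabs ((X1 - X0)*f1)) by (rewrite Rabs_mult, Rabs_pos_eq; lra).
    replace (X1*(f1 - f0)) with (- (X1*f0 - X0*f1) + (X1 - X0)*f1) by ring.
    eapply Rle_trans; [apply Rabs_triang|]. rewrite Rabs_Ropp. lra. }
  assert (X1 * z0 <= X1 * Rabs e0) by (apply Rmult_le_compat_l; lra).
  assert (X1 * z0 <= X1 * Rabs (f1 - f0)) by (apply Rmult_le_compat_l; lra).
  assert (X0 * Rabs e1 <= X0 * z1) by (apply Rmult_le_compat_l; lra).
  assert ((X1 - X0) * Rabs f1 <= (X1 - X0) * z1) by (apply Rmult_le_compat_l; lra).
  assert (X1 * z1 <= X1 * z0) by (apply Rmult_le_compat_l; lra).
  lra.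
Qed.

Lemma strict_real AP AQ AD z0 z1 :
  0 <= AP -> 0 <= AQ -> 2*AP <= AD -> 2*AQ <= AD -> 0 <= z1 -> z1 < z0 ->
  (0 < AP \/ 0 < AQ) -> AP*z0 + AQ*z1 < AD*z0.
Proof.
  intros. destruct (Rle_lt_or_eq_dec 0 AQ H0).
  - assert (AQ*z1 < AQ*z0) by (apply Rmult_lt_compat_l; lra).
    assert ((AP+AQ)*z0 <= AD*z0) by (apply Rmult_le_compat_r; lra). lra.
  - subst AQ. destruct H5; [|lra].
    assert (2*AP*z0 <= AD*z0) by (apply Rmult_le_compat_r; lra).
    assert (0 < AP*z0) by (apply Rmult_lt_0_compat; lra). lra.
Qed.

Lemma bound_e (D P Q : R) e0 e1 z0 z1 :
  0 < Rabs D -> Rabs e0 <= z0 -> Rabs e1 <= z1 -> Rabs P * z0 + Rabs Q * z1 < Rabs D * z0 ->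
  Rabs ((P*e0 + Q*e1)/D) < z0.
Proof.
  intros HD H0 H1 H.
  assert (Rabs (P*e0 + Q*e1) <= Rabs P * z0 + Rabs Q * z1).
  { eapply Rle_trans; [apply Rabs_triang|]. rewrite !Rabs_mult.
    pose proof (Rabs_pos P); pose proof (Rabs_pos Q).
    assert (Rabs P * Rabs e0 <= Rabs P * z0) by (apply Rmult_le_compat_l; lra).
    assert (Rabs Q * Rabs e1 <= Rabs Q * z1) by (apply Rmult_le_compat_l; lra). lra. }
  unfold Rdiv. rewrite Rabs_mult, Rabs_inv.
  apply (Rmult_lt_reg_l (Rabs D)); auto.
  replace (Rabs D * (Rabs (P * e0 + Q * e1) * / Rabs D)) with (Rabs (P*e0+Q*e1)) by (field; lra).
  lra.
Qed.

Lemma prim_contra (th1 th2 th3 : R) (X0 X1 Y01 Y02 Y03 Y11 Y12 Y13 : Z)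
  (HX0 : (0 < X0)%Z) (HX01 : (X0 < X1)%Z) (z0 z1 : R)
  (Hz0 : z0 = M3 (Rabs (th1*IZR X0 - IZR Y01)) (Rabs (th2*IZR X0 - IZR Y02)) (Rabs (th3*IZR X0 - IZR Y03)))
  (Hz1 : z1 = M3 (Rabs (th1*IZR X1 - IZR Y11)) (Rabs (th2*IZR X1 - IZR Y12)) (Rabs (th3*IZR X1 - IZR Y13)))
  (Hz10 : z1 < z0) (Hz0h : z0 <= /2)
  (Hgap : forall x' n1 n2 n3 : Z, (0 < x' < X1)%Z ->
     z0 <= M3 (Rabs (th1*IZR x' - IZR n1)) (Rabs (th2*IZR x' - IZR n2)) (Rabs (th3*IZR x' - IZR n3)))
  (D P Q w0 w1 w2 w3 : Z) (HD : D <> 0%Z) (HP : (2 * Z.abs P <= Z.abs D)%Z) (HQ : (2 * Z.abs Q <= Z.abs D)%Z)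
  (HPQ : P <> 0%Z \/ Q <> 0%Z)
  (E0 : (D*w0 = P*X0 + Q*X1)%Z) (E1 : (D*w1 = P*Y01 + Q*Y11)%Z)
  (E2 : (D*w2 = P*Y02 + Q*Y12)%Z) (E3 : (D*w3 = P*Y03 + Q*Y13)%Z) : False.
Proof.
  set (e01 := th1*IZR X0 - IZR Y01) in *. set (e02 := th2*IZR X0 - IZR Y02) in *.
  set (e03 := th3*IZR X0 - IZR Y03) in *.
  set (e11 := th1*IZR X1 - IZR Y11) in *. set (e12 := th2*IZR X1 - IZR Y12) in *.
  set (e13 := th3*IZR X1 - IZR Y13) in *.
  destruct (M3_ge (Rabs e01) (Rabs e02) (Rabs e03)) as [g1 [g2 g3]]; rewrite <- Hz0 in g1, g2, g3.
  destruct (M3_ge (Rabs e11) (Rabs e12) (Rabs e13)) as [h1 [h2 h3]]; rewrite <- Hz1 in h1, h2, h3.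
  assert (z1p : 0 <= z1) by (pose proof (Rabs_pos e11); lra).
  assert (RD : IZR D <> 0) by (apply not_0_IZR; auto).
  assert (ew : forall (th : R) (wj Yj0 Yj1 : Z), (D*wj = P*Yj0 + Q*Yj1)%Z ->
     th * IZR w0 - IZR wj = (IZR P * (th*IZR X0 - IZR Yj0) + IZR Q * (th*IZR X1 - IZR Yj1)) / IZR D).
  { intros th wj Yj0 Yj1 Ej.
    apply (f_equal IZR) in Ej. apply (f_equal IZR) in E0.
    rewrite mult_IZR, plus_IZR, !mult_IZR in Ej, E0.
    field_simplify_eq; auto.
    replace (th * IZR w0 * IZR D) with (th * (IZR D * IZR w0)) by ring.
    rewrite E0. replace (IZR wj * IZR D) with (IZR D * IZR wj) by ring. rewrite Ej. ring. }
  assert (Hstrict : Rabs (IZR P) * z0 + Rabs (IZR Q) * z1 < Rabs (IZR D) * z0).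
  { rewrite !Rabs_Zabs. apply IZR_le in HP, HQ. rewrite mult_IZR in HP, HQ.
    apply (strict_real _ _ _ z0 z1); try apply IZR_le; try lia; auto.
    destruct HPQ; [left|right]; apply IZR_lt; lia. }
  assert (RDp : 0 < Rabs (IZR D)) by (apply Rabs_pos_lt; auto).
  assert (b1 : Rabs (th1 * IZR w0 - IZR w1) < z0) by (rewrite (ew _ _ _ _ E1); apply (bound_e _ _ _ _ _ z0 z1); auto).
  assert (b2 : Rabs (th2 * IZR w0 - IZR w2) < z0) by (rewrite (ew _ _ _ _ E2); apply (bound_e _ _ _ _ _ z0 z1); auto).
  assert (b3 : Rabs (th3 * IZR w0 - IZR w3) < z0) by (rewrite (ew _ _ _ _ E3); apply (bound_e _ _ _ _ _ z0 z1); auto).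
  destruct (Z.lt_trichotomy w0 0) as [Hw|[Hw|Hw]].
  -
    assert (Habs : (Z.abs D * Z.abs w0 < Z.abs D * X1)%Z).
    { rewrite <- Z.abs_mul, E0.
      pose proof (Z.abs_triangle (P*X0) (Q*X1)). rewrite !Z.abs_mul in H.
      rewrite (Z.abs_eq X0), (Z.abs_eq X1) in H by lia. nia. }
    assert (Z.abs w0 < X1)%Z by nia.
    assert (M3 (Rabs (th1*IZR (-w0) - IZR (-w1))) (Rabs (th2*IZR (-w0) - IZR (-w2))) (Rabs (th3*IZR (-w0) - IZR (-w3))) < z0).
    { rewrite !opp_IZR. apply M3_lub_lt;
      [replace (th1 * - IZR w0 - - IZR w1) with (-(th1 * IZR w0 - IZR w1)) by ring
      |replace (th2 * - IZR w0 - - IZR w2) with (-(th2 * IZR w0 - IZR w2)) by ring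
      |replace (th3 * - IZR w0 - - IZR w3) with (-(th3 * IZR w0 - IZR w3)) by ring];
      rewrite Rabs_Ropp; auto. }
    pose proof (Hgap (-w0)%Z (-w1)%Z (-w2)%Z (-w3)%Z ltac:(lia)). lra.
  -
    subst w0.
    assert (w1 = 0%Z) by (apply IZR_small; rewrite <- Rabs_Ropp; replace (- IZR w1) with (th1*IZR 0 - IZR w1) by (simpl; ring); lra).
    assert (w2 = 0%Z) by (apply IZR_small; rewrite <- Rabs_Ropp; replace (- IZR w2) with (th2*IZR 0 - IZR w2) by (simpl; ring); lra).
    assert (w3 = 0%Z) by (apply IZR_small; rewrite <- Rabs_Ropp; replace (- IZR w3) with (th3*IZR 0 - IZR w3) by (simpl; ring); lra).
    subst w1 w2 w3.
    assert (HP0 : P <> 0%Z) by nia.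
    assert (Hlt : (Z.abs Q < Z.abs P)%Z).
    { assert (Z.abs P * X0 = Z.abs Q * X1)%Z.
      { assert (A : Z.abs (P*X0) = Z.abs (Q*X1)) by (rewrite <- (Z.abs_opp (Q*X1)); f_equal; lia).
        rewrite !Z.abs_mul, (Z.abs_eq X0), (Z.abs_eq X1) in A by lia. exact A. }
      nia. }
    assert (z0p : 0 < z0) by lra.
    assert (zer : forall th Yj0 Yj1, (D*0 = P*Yj0 + Q*Yj1)%Z ->
             Rabs (IZR P) * Rabs (th*IZR X0 - IZR Yj0) = Rabs (IZR Q) * Rabs (th*IZR X1 - IZR Yj1)).
    { intros th Yj0 Yj1 Ej. rewrite <- !Rabs_mult.
      pose proof (ew th 0%Z Yj0 Yj1 Ej) as H. simpl in H.
      assert (IZR P * (th * IZR X0 - IZR Yj0) = - (IZR Q * (th * IZR X1 - IZR Yj1))).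
      { assert ((IZR P * (th * IZR X0 - IZR Yj0) + IZR Q * (th * IZR X1 - IZR Yj1)) = 0); [|lra].
        apply (Rmult_eq_reg_r (/ IZR D)); [|apply Rinv_neq_0_compat; auto].
        rewrite Rmult_0_l. unfold Rdiv in H. rewrite <- H. ring. }
      rewrite H0, Rabs_Ropp. auto. }
    assert (Hc : Rabs (IZR P) * z0 <= Rabs (IZR Q) * z1).
    { pose proof (Rabs_pos (IZR Q)).
      destruct (M3_attain (Rabs e01) (Rabs e02) (Rabs e03)) as [A|[A|A]]; rewrite <- Hz0 in A; rewrite A.
      - rewrite (zer th1 Y01 Y11 E1 : Rabs (IZR P) * Rabs e01 = Rabs (IZR Q) * Rabs e11). apply Rmult_le_compat_l; auto.
      - rewrite (zer th2 Y02 Y12 E2 : Rabs (IZR P) * Rabs e02 = Rabs (IZR Q) * Rabs e12). apply Rmult_le_compat_l; auto.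
      - rewrite (zer th3 Y03 Y13 E3 : Rabs (IZR P) * Rabs e03 = Rabs (IZR Q) * Rabs e13). apply Rmult_le_compat_l; auto. }
    rewrite !Rabs_Zabs in Hc. apply IZR_lt in Hlt.
    assert (IZR (Z.abs Q) * z1 <= IZR (Z.abs Q) * z0) by (apply Rmult_le_compat_l; [apply IZR_le; lia|lra]).
    assert (IZR (Z.abs Q) * z0 < IZR (Z.abs P) * z0) by (apply Rmult_lt_compat_r; lra).
    lra.
  -
    assert (Habs : (Z.abs D * Z.abs w0 < Z.abs D * X1)%Z).
    { rewrite <- Z.abs_mul, E0.
      pose proof (Z.abs_triangle (P*X0) (Q*X1)). rewrite !Z.abs_mul in H.
      rewrite (Z.abs_eq X0), (Z.abs_eq X1) in H by lia. nia. }
    assert (Z.abs w0 < X1)%Z by nia.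
    pose proof (Hgap w0 w1 w2 w3 ltac:(lia)).
    assert (M3 (Rabs (th1 * IZR w0 - IZR w1)) (Rabs (th2 * IZR w0 - IZR w2)) (Rabs (th3 * IZR w0 - IZR w3)) < z0)
      by (apply M3_lub_lt; auto).
    lra.
Qed.

Lemma gram_id (a b : nat -> Z) :
  let A i := IZR (a i) in let B i := IZR (b i) in
  dot4 (zvec a) (zvec a) * dot4 (zvec b) (zvec b) - (dot4 (zvec a) (zvec b))^2 =
  (A 0%nat * B 1%nat - A 1%nat * B 0%nat)^2 + (A 0%nat * B 2%nat - A 2%nat * B 0%nat)^2 +
  (A 0%nat * B 3%nat - A 3%nat * B 0%nat)^2 + (A 1%nat * B 2%nat - A 2%nat * B 1%nat)^2 +
  (A 1%nat * B 3%nat - A 3%nat * B 1%nat)^2 + (A 2%nat * B 3%nat - A 3%nat * B 2%nat)^2.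
Proof. intros. unfold dot4, zvec, A, B. ring. Qed.

Lemma abs_sq y c : Rabs y <= c -> y^2 <= c^2.
Proof. unfold Rabs; destruct Rcase_abs; intros; nra. Qed.

Lemma Ybound th X Y e : 1 <= X -> Rabs e <= /2 -> e = th*X - Y ->
  Y^2 <= ((Rabs th + /2) * X)^2.
Proof.
  intros HX He Ee. apply abs_sq.
  replace Y with (th*X - e) by lra.
  eapply Rle_trans; [apply Rabs_triang|]. rewrite Rabs_Ropp, Rabs_mult, (Rabs_pos_eq X) by lra.
  pose proof (Rabs_pos th). nra.
Qed.

Lemma Wbound e0 e1 t z0 z1 : 0 <= t <= 1 -> Rabs e0 <= z0 -> Rabs e1 <= z1 -> z1 <= z0 ->
  (- e0 + t*e1)^2 <= 4 * z0^2.
Proof.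
  intros Ht H0 H1 H.
  replace (4 * z0^2) with ((2*z0)^2) by ring. apply abs_sq.
  eapply Rle_trans; [apply Rabs_triang|]. rewrite Rabs_Ropp, Rabs_mult, (Rabs_pos_eq t) by lra.
  pose proof (Rabs_pos e1). nra.
Qed.

Lemma core (th1 th2 th3 : R) (X0 X1 Y01 Y02 Y03 Y11 Y12 Y13 : Z)
  (HX0 : (0 < X0)%Z) (HX01 : (X0 < X1)%Z) (z0 z1 : R)
  (Hz0 : z0 = M3 (Rabs (th1*IZR X0 - IZR Y01)) (Rabs (th2*IZR X0 - IZR Y02)) (Rabs (th3*IZR X0 - IZR Y03)))
  (Hz1 : z1 = M3 (Rabs (th1*IZR X1 - IZR Y11)) (Rabs (th2*IZR X1 - IZR Y12)) (Rabs (th3*IZR X1 - IZR Y13)))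
  (Hz10 : z1 < z0) (Hz0h : z0 <= /2)
  (Hgap : forall x' n1 n2 n3 : Z, (0 < x' < X1)%Z ->
     z0 <= M3 (Rabs (th1*IZR x' - IZR n1)) (Rabs (th2*IZR x' - IZR n2)) (Rabs (th3*IZR x' - IZR n3)))
  (a b : nat -> Z) (m1 n1 m2 n2 : Z)
  (Hu0 : X0 = (m1 * a 0%nat + n1 * b 0%nat)%Z) (Hu1 : Y01 = (m1 * a 1%nat + n1 * b 1%nat)%Z)
  (Hu2 : Y02 = (m1 * a 2%nat + n1 * b 2%nat)%Z) (Hu3 : Y03 = (m1 * a 3%nat + n1 * b 3%nat)%Z)
  (Hv0 : X1 = (m2 * a 0%nat + n2 * b 0%nat)%Z) (Hv1 : Y11 = (m2 * a 1%nat + n2 * b 1%nat)%Z)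
  (Hv2 : Y12 = (m2 * a 2%nat + n2 * b 2%nat)%Z) (Hv3 : Y13 = (m2 * a 3%nat + n2 * b 3%nat)%Z) :
  C1_const th1 th2 th3 * detL a b <= z0 * IZR X1 <= 2 * detL a b.
Proof.
  set (Dl := (m1*n2 - m2*n1)%Z).
  assert (z1p : 0 <= z1).
  { rewrite Hz1. destruct (M3_ge (Rabs (th1*IZR X1 - IZR Y11)) (Rabs (th2*IZR X1 - IZR Y12)) (Rabs (th3*IZR X1 - IZR Y13))) as [h _].
    pose proof (Rabs_pos (th1*IZR X1 - IZR Y11)). lra. }
  assert (z0p : 0 < z0) by lra.
  assert (RX0 : 0 < IZR X0) by (apply IZR_lt; auto).
  assert (RX01 : IZR X0 < IZR X1) by (apply IZR_lt; auto).
  assert (Drel : forall j : nat, forall Y0 Y1 : Z,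
     Y0 = (m1 * a j + n1 * b j)%Z -> Y1 = (m2 * a j + n2 * b j)%Z ->
     IZR X0 * IZR Y1 - IZR X1 * IZR Y0 =
       IZR Dl * (IZR (a 0%nat) * IZR (b j) - IZR (a j) * IZR (b 0%nat))).
  { intros j Y0 Y1 -> ->. rewrite Hu0, Hv0. unfold Dl.
    rewrite !plus_IZR, !mult_IZR, !minus_IZR, !mult_IZR. ring. }
  assert (ubraw : forall d,
     Rabs (IZR X1 * (th1*IZR X0 - IZR Y01) - IZR X0 * (th1*IZR X1 - IZR Y11)) <= d ->
     Rabs (IZR X1 * (th2*IZR X0 - IZR Y02) - IZR X0 * (th2*IZR X1 - IZR Y12)) <= d ->
     Rabs (IZR X1 * (th3*IZR X0 - IZR Y03) - IZR X0 * (th3*IZR X1 - IZR Y13)) <= d ->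
     IZR X1 * z0 <= 2 * d).
  { intros d d1 d2 d3.
    destruct (M3_ge (Rabs (th1*IZR X1 - IZR Y11)) (Rabs (th2*IZR X1 - IZR Y12)) (Rabs (th3*IZR X1 - IZR Y13))) as [h1 [h2 h3]].
    rewrite <- Hz1 in h1, h2, h3.
    pose proof (Hgap (X1 - X0)%Z (Y11 - Y01)%Z (Y12 - Y02)%Z (Y13 - Y03)%Z ltac:(lia)) as G.
    rewrite !minus_IZR in G.
    replace (th1 * (IZR X1 - IZR X0) - (IZR Y11 - IZR Y01)) with
      ((th1*IZR X1 - IZR Y11) - (th1*IZR X0 - IZR Y01)) in G by ring.
    replace (th2 * (IZR X1 - IZR X0) - (IZR Y12 - IZR Y02)) with
      ((th2*IZR X1 - IZR Y12) - (th2*IZR X0 - IZR Y02)) in G by ring.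
    replace (th3 * (IZR X1 - IZR X0) - (IZR Y13 - IZR Y03)) with
      ((th3*IZR X1 - IZR Y13) - (th3*IZR X0 - IZR Y03)) in G by ring.
    apply (key_ub (IZR X0) (IZR X1) z0 z1 d); [lra|lra| |].
    - destruct (M3_attain (Rabs (th1*IZR X0 - IZR Y01)) (Rabs (th2*IZR X0 - IZR Y02)) (Rabs (th3*IZR X0 - IZR Y03))) as [A|[A|A]];
        rewrite <- Hz0 in A.
      + exists (th1*IZR X0 - IZR Y01), (th1*IZR X1 - IZR Y11). repeat split; lra.
      + exists (th2*IZR X0 - IZR Y02), (th2*IZR X1 - IZR Y12). repeat split; lra.
      + exists (th3*IZR X0 - IZR Y03), (th3*IZR X1 - IZR Y13). repeat split; lra.
    - match type of G with _ <= M3 ?p ?q ?r => destruct (M3_attain p q r) as [A|[A|A]]; rewrite A in G end.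
      + exists (th1*IZR X0 - IZR Y01), (th1*IZR X1 - IZR Y11). repeat split; lra.
      + exists (th2*IZR X0 - IZR Y02), (th2*IZR X1 - IZR Y12). repeat split; lra.
      + exists (th3*IZR X0 - IZR Y03), (th3*IZR X1 - IZR Y13). repeat split; lra. }
  assert (Dform : forall (th : R) (Y0 Y1 : Z),
     IZR X1 * (th*IZR X0 - IZR Y0) - IZR X0 * (th*IZR X1 - IZR Y1) = IZR X0 * IZR Y1 - IZR X1 * IZR Y0)
    by (intros; ring).
  rewrite !Dform in ubraw.
  rewrite (Drel 1%nat Y01 Y11 Hu1 Hv1), (Drel 2%nat Y02 Y12 Hu2 Hv2), (Drel 3%nat Y03 Y13 Hu3 Hv3) in ubraw.
  assert (HDl : Dl <> 0%Z).
  { intro E. rewrite E in ubraw. rewrite !Rmult_0_l, Rabs_R0 in ubraw.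
    assert (IZR X1 * z0 <= 0) by (rewrite <- (Rmult_0_r 2); apply ubraw; lra).
    assert (0 < IZR X1 * z0) by (apply Rmult_lt_0_compat; lra). lra. }
  assert (sub : forall P0 Q0 c0 c1 c2 c3 : Z, ~ ((Dl | P0) /\ (Dl | Q0)) ->
     (Dl * c0 = P0 * X0 + Q0 * X1)%Z -> (Dl * c1 = P0 * Y01 + Q0 * Y11)%Z ->
     (Dl * c2 = P0 * Y02 + Q0 * Y12)%Z -> (Dl * c3 = P0 * Y03 + Q0 * Y13)%Z -> False).
  { intros P0 Q0 c0 c1 c2 c3 ND C0 C1 C2 C3.
    destruct (centered P0 Dl HDl) as [k [P [EP HP]]].
    destruct (centered Q0 Dl HDl) as [k' [Q [EQ HQ]]].
    apply (prim_contra th1 th2 th3 X0 X1 Y01 Y02 Y03 Y11 Y12 Y13 HX0 HX01 z0 z1 Hz0 Hz1 Hz10 Hz0h Hgap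
             Dl P Q (c0 - k*X0 - k'*X1) (c1 - k*Y01 - k'*Y11) (c2 - k*Y02 - k'*Y12) (c3 - k*Y03 - k'*Y13)
             HDl HP HQ).
    - destruct (Z.eq_dec P 0); [|left; auto]. destruct (Z.eq_dec Q 0); [|right; auto].
      exfalso. apply ND. split; [exists k|exists k']; lia.
    - rewrite !Z.mul_sub_distr_l, C0, EP, EQ. ring.
    - rewrite !Z.mul_sub_distr_l, C1, EP, EQ. ring.
    - rewrite !Z.mul_sub_distr_l, C2, EP, EQ. ring.
    - rewrite !Z.mul_sub_distr_l, C3, EP, EQ. ring. }
  assert (Hun : Z.abs Dl = 1%Z).
  { destruct (Z.eq_dec (Z.abs Dl) 1) as [|NE]; auto. exfalso.
    destruct (notdiv m1 n1 m2 n2 Dl eq_refl ltac:(lia)) as [ND|ND].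
    - apply (sub n2 (-n1)%Z (a 0%nat) (a 1%nat) (a 2%nat) (a 3%nat) ND); subst; unfold Dl; ring.
    - apply (sub (-m2)%Z m1 (b 0%nat) (b 1%nat) (b 2%nat) (b 3%nat) ND); subst; unfold Dl; ring. }
  pose proof (gram_id a b) as GI. cbv beta zeta in GI. unfold detL. rewrite GI.
  set (A0 := IZR (a 0%nat)) in *. set (A1 := IZR (a 1%nat)) in *.
  set (A2 := IZR (a 2%nat)) in *. set (A3 := IZR (a 3%nat)) in *.
  set (B0 := IZR (b 0%nat)) in *. set (B1 := IZR (b 1%nat)) in *.
  set (B2 := IZR (b 2%nat)) in *. set (B3 := IZR (b 3%nat)) in *.
  set (G := (A0 * B1 - A1 * B0) ^ 2 + (A0 * B2 - A2 * B0) ^ 2 + (A0 * B3 - A3 * B0) ^ 2 +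
      (A1 * B2 - A2 * B1) ^ 2 + (A1 * B3 - A3 * B1) ^ 2 + (A2 * B3 - A3 * B2) ^ 2).
  assert (RDl : Rabs (IZR Dl) = 1) by (rewrite Rabs_Zabs, Hun; reflexivity).
  split.
  - set (e01 := th1*IZR X0 - IZR Y01) in *. set (e02 := th2*IZR X0 - IZR Y02) in *.
    set (e03 := th3*IZR X0 - IZR Y03) in *.
    set (e11 := th1*IZR X1 - IZR Y11) in *. set (e12 := th2*IZR X1 - IZR Y12) in *.
    set (e13 := th3*IZR X1 - IZR Y13) in *.
    destruct (M3_ge (Rabs e01) (Rabs e02) (Rabs e03)) as [g1 [g2 g3]]; rewrite <- Hz0 in g1, g2, g3.
    destruct (M3_ge (Rabs e11) (Rabs e12) (Rabs e13)) as [h1 [h2 h3]]; rewrite <- Hz1 in h1, h2, h3.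
    assert (RX1 : 1 <= IZR X1) by (apply IZR_le; lia).
    set (x0 := IZR X0) in *. set (x1 := IZR X1) in *.
    set (t := x0 / x1).
    assert (Ht : 0 <= t <= 1).
    { unfold t. split. apply Rlt_le, Rdiv_lt_0_compat; lra.
      apply (Rmult_le_reg_r x1); [lra|]. unfold Rdiv. rewrite Rmult_assoc, Rinv_l by lra. lra. }
    assert (Htx : t * x1 = x0) by (unfold t; field; lra).
    set (S := 1 + (Rabs th1 + /2)^2 + (Rabs th2 + /2)^2 + (Rabs th3 + /2)^2).
    assert (HGu : G = (x0*x0 + IZR Y01 * IZR Y01 + IZR Y02 * IZR Y02 + IZR Y03 * IZR Y03) *
                      (x1*x1 + IZR Y11 * IZR Y11 + IZR Y12 * IZR Y12 + IZR Y13 * IZR Y13) -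
                      (x0*x1 + IZR Y01 * IZR Y11 + IZR Y02 * IZR Y12 + IZR Y03 * IZR Y13)^2).
    { assert (IZR Dl ^ 2 = 1).
      { assert (Dl = 1 \/ Dl = -1)%Z as [E|E] by lia; rewrite E; simpl; ring. }
      unfold x0, x1. rewrite Hu0, Hu1, Hu2, Hu3, Hv0, Hv1, Hv2, Hv3.
      rewrite <- (Rmult_1_l G). rewrite <- H. unfold Dl, G.
      rewrite !plus_IZR, !minus_IZR, !mult_IZR. fold A0 A1 A2 A3 B0 B1 B2 B3. ring. }
    assert (HGW : G = ((x0 - t*x1)^2 + (IZR Y01 - t*IZR Y11)^2 + (IZR Y02 - t*IZR Y12)^2 + (IZR Y03 - t*IZR Y13)^2) *
                      (x1*x1 + IZR Y11 * IZR Y11 + IZR Y12 * IZR Y12 + IZR Y13 * IZR Y13) -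
                      ((x0 - t*x1)*x1 + (IZR Y01 - t*IZR Y11) * IZR Y11 + (IZR Y02 - t*IZR Y12) * IZR Y12
                        + (IZR Y03 - t*IZR Y13) * IZR Y13)^2) by (rewrite HGu; ring).
    rewrite Htx, Rminus_diag in HGW.
    assert (W1 : (IZR Y01 - t*IZR Y11)^2 <= 4*z0^2).
    { replace (IZR Y01 - t*IZR Y11) with (-e01 + t*e11) by (unfold e01, e11; rewrite <- Htx; ring).
      apply (Wbound _ _ _ _ z1); auto; lra. }
    assert (W2 : (IZR Y02 - t*IZR Y12)^2 <= 4*z0^2).
    { replace (IZR Y02 - t*IZR Y12) with (-e02 + t*e12) by (unfold e02, e12; rewrite <- Htx; ring).
      apply (Wbound _ _ _ _ z1); auto; lra. }
    assert (W3 : (IZR Y03 - t*IZR Y13)^2 <= 4*z0^2).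
    { replace (IZR Y03 - t*IZR Y13) with (-e03 + t*e13) by (unfold e03, e13; rewrite <- Htx; ring).
      apply (Wbound _ _ _ _ z1); auto; lra. }
    assert (V1 : IZR Y11^2 <= ((Rabs th1 + /2) * x1)^2) by (apply (Ybound th1 x1 _ e11); auto; lra).
    assert (V2 : IZR Y12^2 <= ((Rabs th2 + /2) * x1)^2) by (apply (Ybound th2 x1 _ e12); auto; lra).
    assert (V3 : IZR Y13^2 <= ((Rabs th3 + /2) * x1)^2) by (apply (Ybound th3 x1 _ e13); auto; lra).
    assert (HV : x1*x1 + IZR Y11 * IZR Y11 + IZR Y12 * IZR Y12 + IZR Y13 * IZR Y13 <= S * x1^2).
    { unfold S. simpl pow in *. nra. }
    assert (HW0 : 0 <= 0 ^ 2 + (IZR Y01 - t * IZR Y11) ^ 2 + (IZR Y02 - t * IZR Y12) ^ 2 + (IZR Y03 - t * IZR Y13) ^ 2).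
    { pose proof (pow2_ge_0 (IZR Y01 - t * IZR Y11)); pose proof (pow2_ge_0 (IZR Y02 - t * IZR Y12));
      pose proof (pow2_ge_0 (IZR Y03 - t * IZR Y13)). simpl (0^2). lra. }
    assert (HV0 : 0 <= x1*x1 + IZR Y11 * IZR Y11 + IZR Y12 * IZR Y12 + IZR Y13 * IZR Y13).
    { pose proof (pow2_ge_0 (IZR Y11)); pose proof (pow2_ge_0 (IZR Y12)); pose proof (pow2_ge_0 (IZR Y13)).
      simpl pow in *. nra. }
    assert (HGb : G <= (12 * z0^2) * (S * x1^2)).
    { rewrite HGW.
      pose proof (pow2_ge_0 (0 * x1 + (IZR Y01 - t * IZR Y11) * IZR Y11 + (IZR Y02 - t * IZR Y12) * IZR Y12 +
         (IZR Y03 - t * IZR Y13) * IZR Y13)).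
      assert (0 ^ 2 + (IZR Y01 - t * IZR Y11) ^ 2 + (IZR Y02 - t * IZR Y12) ^ 2 + (IZR Y03 - t * IZR Y13) ^ 2 <= 12 * z0^2)
        by (simpl (0^2); lra).
      assert ((0 ^ 2 + (IZR Y01 - t * IZR Y11) ^ 2 + (IZR Y02 - t * IZR Y12) ^ 2 + (IZR Y03 - t * IZR Y13) ^ 2) *
        (x1*x1 + IZR Y11 * IZR Y11 + IZR Y12 * IZR Y12 + IZR Y13 * IZR Y13) <= (12 * z0^2) * (S * x1^2))
        by (apply Rmult_le_compat; auto).
      lra. }
    assert (Sp : 0 < S).
    { unfold S. pose proof (pow2_ge_0 (Rabs th1 + /2)); pose proof (pow2_ge_0 (Rabs th2 + /2));
      pose proof (pow2_ge_0 (Rabs th3 + /2)). lra. }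
    assert (sq : 0 < sqrt (3 * S)) by (apply sqrt_lt_R0; lra).
    set (K := 2 * sqrt (3*S) * z0 * x1).
    assert (Kp : 0 <= K) by (unfold K; apply Rmult_le_pos; [apply Rmult_le_pos|]; lra).
    assert (K2 : K^2 = (12 * z0^2) * (S * x1^2)).
    { unfold K. replace ((2 * sqrt (3 * S) * z0 * x1)^2) with (4 * (sqrt (3*S) * sqrt (3*S)) * z0^2 * x1^2) by ring.
      rewrite sqrt_sqrt by lra. ring. }
    assert (sqrt G <= K).
    { rewrite <- (sqrt_pow2 K Kp). apply sqrt_le_1_alt. lra. }
    unfold C1_const. fold S.
    apply (Rle_trans _ (/ (2 * sqrt (3 * S)) * K)).
    + apply Rmult_le_compat_l; auto. apply Rlt_le, Rinv_0_lt_compat. lra.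
    + unfold K. right. field. lra.
  - rewrite Rmult_comm; apply ubraw; rewrite Rabs_mult, RDl, Rmult_1_l, <- sqrt_Rsqr_abs; apply sqrt_le_1_alt;
      unfold Rsqr; unfold G;
      pose proof (pow2_ge_0 (A0 * B1 - A1 * B0)); pose proof (pow2_ge_0 (A0 * B2 - A2 * B0));
      pose proof (pow2_ge_0 (A0 * B3 - A3 * B0)); pose proof (pow2_ge_0 (A1 * B2 - A2 * B1));
      pose proof (pow2_ge_0 (A1 * B3 - A3 * B1)); pose proof (pow2_ge_0 (A2 * B3 - A3 * B2));
      simpl pow in *; lra.
Qed.

Lemma x_lt (x : nat -> Z) (H : forall l, (x l < x (S l))%Z) p q : (p < q)%nat -> (x p < x q)%Z.
Proof.
  induction 1. apply H. specialize (H m). lia.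
Qed.

Lemma x_le (x : nat -> Z) (H : forall l, (x l < x (S l))%Z) p q : (p <= q)%nat -> (x p <= x q)%Z.
Proof.
  intro Hpq. destruct (Nat.eq_dec p q). subst; lia. pose proof (x_lt x H p q ltac:(lia)). lia.
Qed.

Lemma argmin (f : Z -> R) : forall N : Z, (1 <= N)%Z ->
  exists m, (1 <= m <= N)%Z /\ forall x', (1 <= x' <= N)%Z -> f m <= f x'.
Proof.
  apply Z.le_ind.
  - intros ? ? ->. reflexivity.
  - exists 1%Z. split. lia. intros x' Hx. assert (x' = 1%Z) by lia. subst. lra.
  - intros N HN [m [Hm Hf]]. destruct (Rle_dec (f m) (f (Z.succ N))).
    + exists m. split. lia. intros x' Hx. destruct (Z.eq_dec x' (Z.succ N)). subst; auto. apply Hf. lia.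
    + exists (Z.succ N). split. lia. intros x' Hx. destruct (Z.eq_dec x' (Z.succ N)). subst; lra.
      specialize (Hf x' ltac:(lia)). lra.
Qed.

Lemma gap_main (th1 th2 th3 : R) (x : nat -> Z) (Hx_incr : forall l, (x l < x (S l))%Z)
  (Hx_best : forall n : Z, is_best th1 th2 th3 n <-> exists l, x l = n) l x' :
  (0 < x' < x (S l))%Z -> zeta th1 th2 th3 (x l) <= zeta th1 th2 th3 x'.
Proof.
  intros Hx'. destruct (argmin (zeta th1 th2 th3) x' ltac:(lia)) as [m [Hm Hf]].
  assert (Hb : is_best th1 th2 th3 m) by (split; [lia|intros; apply Hf; lia]).
  apply Hx_best in Hb. destruct Hb as [p Hp].
  assert (p <= l)%nat.
  { destruct (Nat.le_gt_cases p l); auto. pose proof (x_le x Hx_incr (S l) p ltac:(lia)). lia. }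
  assert (Hbl : is_best th1 th2 th3 (x l)) by (apply Hx_best; eauto).
  destruct Hbl as [Hl0 Hl]. apply (Rle_trans _ (zeta th1 th2 th3 m)).
  - apply Hl. pose proof (x_le x Hx_incr p l H). lia.
  - apply Hf. lia.
Qed.

Definition thf (th1 th2 th3 : R) (i : nat) := match i with 1%nat => th1 | 2%nat => th2 | _ => th3 end.

Lemma rel_lemma (th1 th2 th3 : R)
  (Hind : forall a0 a1 a2 a3 : Z,
      IZR a0 + IZR a1 * th1 + IZR a2 * th2 + IZR a3 * th3 = 0 ->
      a0 = 0%Z /\ a1 = 0%Z /\ a2 = 0%Z /\ a3 = 0%Z)
  (i j : nat) (Hi : (1 <= i <= 3)%nat) (Hj : (1 <= j <= 3)%nat) (X0 X1 Yi Yj : Z)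
  (HX : (0 < X0 < X1)%Z) (s : R) (Hs : s = 1 \/ s = -1)
  (H : thf th1 th2 th3 i * IZR X0 - IZR Yi = s * (thf th1 th2 th3 j * IZR X1 - IZR Yj)) : False.
Proof.
  destruct Hs; subst s.
  - destruct i as [|[|[|[|]]]]; try lia; destruct j as [|[|[|[|]]]]; try lia; simpl in H.
    + destruct (Hind (Yj - Yi)%Z (X0 - X1)%Z 0%Z 0%Z) as [_ [? _]]; [rewrite !minus_IZR; lra|lia].
    + destruct (Hind (Yj - Yi)%Z X0 (-X1)%Z 0%Z) as [_ [? _]]; [rewrite !minus_IZR, opp_IZR; lra|lia].
    + destruct (Hind (Yj - Yi)%Z X0 0%Z (-X1)%Z) as [_ [? _]]; [rewrite !minus_IZR, opp_IZR; lra|lia].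
    + destruct (Hind (Yj - Yi)%Z (-X1)%Z X0 0%Z) as [_ [_ [? _]]]; [rewrite !minus_IZR, opp_IZR; lra|lia].
    + destruct (Hind (Yj - Yi)%Z 0%Z (X0 - X1)%Z 0%Z) as [_ [_ [? _]]]; [rewrite !minus_IZR; lra|lia].
    + destruct (Hind (Yj - Yi)%Z 0%Z X0 (-X1)%Z) as [_ [_ [? _]]]; [rewrite !minus_IZR, opp_IZR; lra|lia].
    + destruct (Hind (Yj - Yi)%Z (-X1)%Z 0%Z X0) as [_ [_ [_ ?]]]; [rewrite !minus_IZR, opp_IZR; lra|lia].
    + destruct (Hind (Yj - Yi)%Z 0%Z (-X1)%Z X0) as [_ [_ [_ ?]]]; [rewrite !minus_IZR, opp_IZR; lra|lia].
    + destruct (Hind (Yj - Yi)%Z 0%Z 0%Z (X0 - X1)%Z) as [_ [_ [_ ?]]]; [rewrite !minus_IZR; lra|lia].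
  - destruct i as [|[|[|[|]]]]; try lia; destruct j as [|[|[|[|]]]]; try lia; simpl in H.
    + destruct (Hind (-Yj - Yi)%Z (X0 + X1)%Z 0%Z 0%Z) as [_ [? _]]; [rewrite minus_IZR, plus_IZR, opp_IZR; lra|lia].
    + destruct (Hind (-Yj - Yi)%Z X0 X1 0%Z) as [_ [? _]]; [rewrite minus_IZR, opp_IZR; lra|lia].
    + destruct (Hind (-Yj - Yi)%Z X0 0%Z X1) as [_ [? _]]; [rewrite minus_IZR, opp_IZR; lra|lia].
    + destruct (Hind (-Yj - Yi)%Z X1 X0 0%Z) as [_ [_ [? _]]]; [rewrite minus_IZR, opp_IZR; lra|lia].
    + destruct (Hind (-Yj - Yi)%Z 0%Z (X0 + X1)%Z 0%Z) as [_ [_ [? _]]]; [rewrite minus_IZR, plus_IZR, opp_IZR; lra|lia].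
    + destruct (Hind (-Yj - Yi)%Z 0%Z X0 X1) as [_ [_ [? _]]]; [rewrite minus_IZR, opp_IZR; lra|lia].
    + destruct (Hind (-Yj - Yi)%Z X1 0%Z X0) as [_ [_ [_ ?]]]; [rewrite minus_IZR, opp_IZR; lra|lia].
    + destruct (Hind (-Yj - Yi)%Z 0%Z X1 X0) as [_ [_ [_ ?]]]; [rewrite minus_IZR, opp_IZR; lra|lia].
    + destruct (Hind (-Yj - Yi)%Z 0%Z 0%Z (X0 + X1)%Z) as [_ [_ [_ ?]]]; [rewrite minus_IZR, plus_IZR, opp_IZR; lra|lia].
Qed.

Lemma rel_pos (th1 th2 th3 : R)
  (Hind : forall a0 a1 a2 a3 : Z,
      IZR a0 + IZR a1 * th1 + IZR a2 * th2 + IZR a3 * th3 = 0 ->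
      a0 = 0%Z /\ a1 = 0%Z /\ a2 = 0%Z /\ a3 = 0%Z)
  (i j : nat) (Hi : (1 <= i <= 3)%nat) (Hj : (1 <= j <= 3)%nat) (X0 X1 Yi Yj : Z)
  (HX : (0 < X0 < X1)%Z)
  (H : thf th1 th2 th3 i * IZR X0 - IZR Yi = thf th1 th2 th3 j * IZR X1 - IZR Yj) : False.
Proof. apply (rel_lemma th1 th2 th3 Hind i j Hi Hj X0 X1 Yi Yj HX 1 (or_introl eq_refl)). lra. Qed.

Lemma rel_neg (th1 th2 th3 : R)
  (Hind : forall a0 a1 a2 a3 : Z,
      IZR a0 + IZR a1 * th1 + IZR a2 * th2 + IZR a3 * th3 = 0 ->
      a0 = 0%Z /\ a1 = 0%Z /\ a2 = 0%Z /\ a3 = 0%Z)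
  (i j : nat) (Hi : (1 <= i <= 3)%nat) (Hj : (1 <= j <= 3)%nat) (X0 X1 Yi Yj : Z)
  (HX : (0 < X0 < X1)%Z)
  (H : thf th1 th2 th3 i * IZR X0 - IZR Yi = - (thf th1 th2 th3 j * IZR X1 - IZR Yj)) : False.
Proof. apply (rel_lemma th1 th2 th3 Hind i j Hi Hj X0 X1 Yi Yj HX (-1) (or_intror eq_refl)). lra. Qed.

Theorem lemma1 (th1 th2 th3 : R)
  (Hind : forall a0 a1 a2 a3 : Z,
      IZR a0 + IZR a1 * th1 + IZR a2 * th2 + IZR a3 * th3 = 0 ->
      a0 = 0%Z /\ a1 = 0%Z /\ a2 = 0%Z /\ a3 = 0%Z)
  (x : nat -> Z)
  (Hx_incr : forall l, (x l < x (S l))%Z)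
  (Hx_best : forall n : Z, is_best th1 th2 th3 n <-> exists l, x l = n)
  (y1 y2 y3 : nat -> Z)
  (Hy1 : forall l, Rabs (th1 * IZR (x l) - IZR (y1 l)) = dnint (th1 * IZR (x l)))
  (Hy2 : forall l, Rabs (th2 * IZR (x l) - IZR (y2 l)) = dnint (th2 * IZR (x l)))
  (Hy3 : forall l, Rabs (th3 * IZR (x l) - IZR (y3 l)) = dnint (th3 * IZR (x l)))
  (nu k : nat) (Hnuk : (nu < k)%nat)
  (p1 p2 : nat -> R) (Hp : lin_indep2 p1 p2)
  (Hpi : forall l, (nu <= l <= k)%nat ->
      in_span p1 p2 (fun i => match i with
                              | 0%nat => IZR (x l)
                              | 1%nat => IZR (y1 l)
                              | 2%nat => IZR (y2 l)
                              | _ => IZR (y3 l) end))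
  (a b : nat -> Z)
  (HLambda : forall z : nat -> Z,
      in_span p1 p2 (zvec z) <->
      exists m n : Z, forall i, (i < 4)%nat -> z i = (m * a i + n * b i)%Z) :
  (forall l, (nu <= l)%nat -> (l < k)%nat ->
      C1_const th1 th2 th3 * detL a b <= zeta th1 th2 th3 (x l) * IZR (x (S l)) <= 2 * detL a b)
  /\ detL a b >= / 2 * Rmin (zeta th1 th2 th3 (x nu) * IZR (x (S nu)))
                             (zeta th1 th2 th3 (x (k - 1)%nat) * IZR (x k)).
Proof.
  assert (xpos : forall l, (0 < x l)%Z)
    by (intro l; destruct (proj2 (Hx_best (x l)) (ex_intro _ l eq_refl)); auto).
  assert (zM : forall l, zeta th1 th2 th3 (x l) =
     M3 (Rabs (th1*IZR (x l) - IZR (y1 l))) (Rabs (th2*IZR (x l) - IZR (y2 l))) (Rabs (th3*IZR (x l) - IZR (y3 l))))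
    by (intro; unfold zeta, M3; rewrite Hy1, Hy2, Hy3; reflexivity).
  assert (zle : forall l, zeta th1 th2 th3 (x (S l)) <= zeta th1 th2 th3 (x l)).
  { intro l. destruct (proj2 (Hx_best (x (S l))) (ex_intro _ (S l) eq_refl)) as [_ H].
    apply H. pose proof (xpos l); pose proof (Hx_incr l). lia. }
  assert (zstrict : forall l, zeta th1 th2 th3 (x (S l)) < zeta th1 th2 th3 (x l)).
  { intro l. destruct (Rle_lt_or_eq_dec _ _ (zle l)) as [|E]; auto. exfalso.
    assert (HXX : (0 < x l < x (S l))%Z) by (pose proof (xpos l); pose proof (Hx_incr l); lia).
    symmetry in E. rewrite !zM in E.
    destruct (M3_attain (Rabs (th1*IZR (x l) - IZR (y1 l))) (Rabs (th2*IZR (x l) - IZR (y2 l))) (Rabs (th3*IZR (x l) - IZR (y3 l)))) as [A|[A|A]];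
    destruct (M3_attain (Rabs (th1*IZR (x (S l)) - IZR (y1 (S l)))) (Rabs (th2*IZR (x (S l)) - IZR (y2 (S l)))) (Rabs (th3*IZR (x (S l)) - IZR (y3 (S l))))) as [B|[B|B]];
    rewrite A, B in E; apply Rabs_eq_cases in E; destruct E as [E|E];
    first
      [ exact (rel_pos th1 th2 th3 Hind 1 1 ltac:(lia) ltac:(lia) _ _ _ _ HXX E)
      | exact (rel_pos th1 th2 th3 Hind 1 2 ltac:(lia) ltac:(lia) _ _ _ _ HXX E)
      | exact (rel_pos th1 th2 th3 Hind 1 3 ltac:(lia) ltac:(lia) _ _ _ _ HXX E)
      | exact (rel_pos th1 th2 th3 Hind 2 1 ltac:(lia) ltac:(lia) _ _ _ _ HXX E)
      | exact (rel_pos th1 th2 th3 Hind 2 2 ltac:(lia) ltac:(lia) _ _ _ _ HXX E)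
      | exact (rel_pos th1 th2 th3 Hind 2 3 ltac:(lia) ltac:(lia) _ _ _ _ HXX E)
      | exact (rel_pos th1 th2 th3 Hind 3 1 ltac:(lia) ltac:(lia) _ _ _ _ HXX E)
      | exact (rel_pos th1 th2 th3 Hind 3 2 ltac:(lia) ltac:(lia) _ _ _ _ HXX E)
      | exact (rel_pos th1 th2 th3 Hind 3 3 ltac:(lia) ltac:(lia) _ _ _ _ HXX E)
      | exact (rel_neg th1 th2 th3 Hind 1 1 ltac:(lia) ltac:(lia) _ _ _ _ HXX E)
      | exact (rel_neg th1 th2 th3 Hind 1 2 ltac:(lia) ltac:(lia) _ _ _ _ HXX E)
      | exact (rel_neg th1 th2 th3 Hind 1 3 ltac:(lia) ltac:(lia) _ _ _ _ HXX E)
      | exact (rel_neg th1 th2 th3 Hind 2 1 ltac:(lia) ltac:(lia) _ _ _ _ HXX E)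
      | exact (rel_neg th1 th2 th3 Hind 2 2 ltac:(lia) ltac:(lia) _ _ _ _ HXX E)
      | exact (rel_neg th1 th2 th3 Hind 2 3 ltac:(lia) ltac:(lia) _ _ _ _ HXX E)
      | exact (rel_neg th1 th2 th3 Hind 3 1 ltac:(lia) ltac:(lia) _ _ _ _ HXX E)
      | exact (rel_neg th1 th2 th3 Hind 3 2 ltac:(lia) ltac:(lia) _ _ _ _ HXX E)
      | exact (rel_neg th1 th2 th3 Hind 3 3 ltac:(lia) ltac:(lia) _ _ _ _ HXX E) ]. }
  assert (coords : forall l, (nu <= l <= k)%nat -> exists m n : Z,
     x l = (m * a 0%nat + n * b 0%nat)%Z /\ y1 l = (m * a 1%nat + n * b 1%nat)%Z /\
     y2 l = (m * a 2%nat + n * b 2%nat)%Z /\ y3 l = (m * a 3%nat + n * b 3%nat)%Z).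
  { intros l Hl.
    assert (Hs : in_span p1 p2 (zvec (fun i => match i with 0%nat => x l | 1%nat => y1 l | 2%nat => y2 l | _ => y3 l end))).
    { destruct (Hpi l Hl) as [c [d Hcd]]. exists c, d. intros i Hi. rewrite <- Hcd by auto.
      destruct i as [|[|[|]]]; reflexivity. }
    apply HLambda in Hs. destruct Hs as [m [n Hmn]]. exists m, n.
    repeat split; [apply (Hmn 0%nat)|apply (Hmn 1%nat)|apply (Hmn 2%nat)|apply (Hmn 3%nat)]; lia. }
  assert (part1 : forall l, (nu <= l)%nat -> (l < k)%nat ->
      C1_const th1 th2 th3 * detL a b <= zeta th1 th2 th3 (x l) * IZR (x (S l)) <= 2 * detL a b).
  { intros l Hl1 Hl2.
    destruct (coords l ltac:(lia)) as [m1 [n1 [Hu0 [Hu1 [Hu2 Hu3]]]]].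
    destruct (coords (S l) ltac:(lia)) as [m2 [n2 [Hv0 [Hv1 [Hv2 Hv3]]]]].
    apply (core th1 th2 th3 (x l) (x (S l)) (y1 l) (y2 l) (y3 l) (y1 (S l)) (y2 (S l)) (y3 (S l))
             (xpos l) (Hx_incr l) _ _ (zM l) (zM (S l)) (zstrict l)) with (m1 := m1) (n1 := n1) (m2 := m2) (n2 := n2); auto.
    - unfold zeta. pose proof (dnint_half (th1 * IZR (x l))); pose proof (dnint_half (th2 * IZR (x l)));
      pose proof (dnint_half (th3 * IZR (x l))). repeat apply Rmax_lub; lra.
    - intros x' n1' n2' n3' Hx'. eapply Rle_trans; [apply (gap_main th1 th2 th3 x Hx_incr Hx_best l x' Hx')|].
      unfold zeta. change (M3 (dnint (th1 * IZR x')) (dnint (th2 * IZR x')) (dnint (th3 * IZR x')) <=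
        M3 (Rabs (th1 * IZR x' - IZR n1')) (Rabs (th2 * IZR x' - IZR n2')) (Rabs (th3 * IZR x' - IZR n3'))).
      apply M3_mono; apply dnint_le. }
  split; auto.
  destruct (part1 nu ltac:(lia) Hnuk) as [_ A].
  destruct (part1 (k-1)%nat ltac:(lia) ltac:(lia)) as [_ B].
  replace (S (k-1)) with k in B by lia.
  pose proof (Rmin_l (zeta th1 th2 th3 (x nu) * IZR (x (S nu))) (zeta th1 th2 th3 (x (k - 1)%nat) * IZR (x k))).
  lra.
Qed.
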